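(* Let $n,s,k$ be positive integers with $n\ge(s+1)k$. Suppose that for any cross-dependent families $\mathcal G_1,\ldots,\mathcal G_{s+1}\subset\binom{[n]}{k}$ we have $\min_i|\mathcal G_i|\le\binom{n}{k}-\binom{n-s}{k}$. Then for any cross-dependent families $\mathcal F_1,\ldots,\mathcal F_{s+1}\subset\binom{[n+1]}{k}$ we have $\min_i|\mathcal F_i|\le\binom{n+1}{k}-\binom{n+1-s}{k}$.
   Context: $[n]=\{1,\ldots,n\}$ and $\binom{X}{k}$ denotes the family of all $k$-element subsets of $X$. Families $\mathcal F_1,\ldots,\mathcal F_{s+1}$ are called cross-dependent if there are no pairwise disjoint sets $F_1,\ldots,F_{s+1}$ with $F_i\in\mathcal F_i$ for every $i$. *)

(* Defs.v *)
From mathcomp Require Import all_boot.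
Set Implicit Arguments. Unset Strict Implicit. Unset Printing Implicit Defensive.

Definition kuniform (n k : nat) (F : {set {set 'I_n}}) : Prop :=
  forall A, A \in F -> #|A| = k.

Definition cross_dependent (n s : nat) (F : 'I_s.+1 -> {set {set 'I_n}}) : Prop :=
  ~ exists A : 'I_s.+1 -> {set 'I_n},
      (forall i, A i \in F i) /\
      (forall i j, i != j -> [disjoint A i & A j]).

(* Main.v *)
Require Import Defs.
From mathcomp Require Import all_boot zify.
From Stdlib Require Import Classical.
Set Implicit Arguments. Unset Strict Implicit. Unset Printing Implicit Defensive.

Section Shift.
Variable N : nat.
Implicit Types (x y z : 'I_N) (A B C : {set 'I_N}) (F : {set {set 'I_N}}).

Lemma disjP (A B : {set 'I_N}) :
  [disjoint A & B] <-> (forall z, z \in A -> z \in B -> False).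
Proof.
split.
- by move=> dAB z zA zB; rewrite (disjointFr dAB zA) in zB.
- move=> H; rewrite disjoint_subset; apply/subsetP => z zA; rewrite inE /=.
  by apply/negP => zB; exact: H z zA zB.
Qed.

Lemma card_split (T : finType) (X : {set T}) (P : pred T) :
  #|X| = #|[set a in X | P a]| + #|[set a in X | ~~ P a]|.
Proof.
rewrite -(cardsID [set a | P a] X); congr (_ + _); apply: eq_card => a;
  by rewrite !inE // andbC.
Qed.

Definition sh x y A := if (y \in A) && (x \notin A) then x |: (A :\ y) else A.
Definition shF x y F :=
  [set (if sh x y A \in F then A else sh x y A) | A in F].

Ltac settac := apply/setP => ?; rewrite !inE;
  repeat (rewrite ?eqxx /=; match goal with |- context [?a == ?b] => case: (a =P b) => [?|?]; subst end);
  try by [].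

Lemma sh_back x y A : x != y -> y \in A -> x \notin A ->
  y |: ((x |: (A :\ y)) :\ x) = A.
Proof.
move=> nxy yA xA; settac. all: try by rewrite eqxx in nxy. all: rewrite ?(negbTE xA) ?yA //.
Qed.

Lemma sh_card x y A : #|sh x y A| = #|A|.
Proof.
rewrite /sh; case: ifP => // /andP [yA xA].
by rewrite cardsU1 (cardsD1 y A) yA !inE (negbTE xA) andbF.
Qed.

Lemma sh_moved x y F A : A \in F -> sh x y A \notin F ->
  [/\ y \in A, x \notin A & sh x y A = x |: (A :\ y)].
Proof.
move=> AF; rewrite /sh; case: ifP => [/andP[yA xA] _|_]; first by [].
by rewrite AF.
Qed.

Lemma shF_inj x y F : x != y ->
  {in F &, injective (fun A => if sh x y A \in F then A else sh x y A)}.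
Proof.
move=> nxy A B AF BF /=.
case: ifP => hA; case: ifP => hB //.
- by move=> E; rewrite -E AF in hB.
- by move=> E; rewrite E BF in hA.
have [yA xA ->] := sh_moved AF (negbT hA).
have [yB xB ->] := sh_moved BF (negbT hB).
by move=> E; rewrite -(sh_back nxy yA xA) E sh_back.
Qed.

Lemma shF_card x y F : x != y -> #|shF x y F| = #|F|.
Proof. by move=> nxy; apply: card_in_imset; apply: shF_inj. Qed.

Lemma shF_mem x y F C : x != y -> C \in shF x y F ->
  C \in F \/ [/\ x \in C, y \notin C & y |: (C :\ x) \in F].
Proof.
move=> nxy /imsetP [A AF ->]; case: ifP => hA; [by left|right].
have [yA xA ->] := sh_moved AF (negbT hA).
rewrite sh_back // !inE eqxx [y == x]eq_sym (negbTE nxy) eqxx /=; by split.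
Qed.

Lemma shF_mem_y x y F C : x != y -> C \in shF x y F -> y \in C -> x \notin C ->
  C \in F /\ x |: (C :\ y) \in F.
Proof.
move=> nxy /imsetP [A AF ->]; case: ifP => hA yC xC.
- by split=> //; move: hA; rewrite /sh yC xC.
- have [yA xA E] := sh_moved AF (negbT hA).
  by move: xC; rewrite E !inE eqxx.
Qed.

Lemma shF_unif k x y F : kuniform k F -> kuniform k (shF x y F).
Proof.
move=> hF C /imsetP [A AF ->]; case: ifP => _; first exact: hF.
by rewrite sh_card; apply: hF.
Qed.

Definition sw x y z := if z == x then y else if z == y then x else z.

Lemma shF_cross s x y (F : 'I_s.+1 -> {set {set 'I_N}}) : x != y ->
  cross_dependent F -> cross_dependent (fun i => shF x y (F i)).
Proof.
move=> nxy CD [A [AF Adis]]; apply: CD.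
case: (classic (exists i0, A i0 \notin F i0)) => [[i0 hi0]|hall]; last first.
  exists A; split=> // i; apply/negPn/negP => h; apply: hall; by exists i.
have [|[xA0 yA0 B0F]] := shF_mem nxy (AF i0); first by rewrite (negbTE hi0).
have xonly : forall i, x \in A i -> i = i0.
  move=> i xi; apply/eqP; apply/negPn/negP => ne.
  exact: (proj1 (disjP _ _) (Adis _ _ ne) x xi xA0).
exists (fun i => [set z | sw x y z \in A i]); split; last first.
  move=> i j ij; apply/disjP => z; rewrite !inE => zi zj.
  exact: (proj1 (disjP _ _) (Adis _ _ ij) _ zi zj).
move=> i; case xi: (x \in A i).
  have ei := xonly i xi; subst i.
  suff -> : [set z | sw x y z \in A i0] = y |: (A i0 :\ x) by [].
  apply/setP => z; rewrite /sw !inE.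
  case: (z =P x) => [->|zx]; first by rewrite (negbTE yA0) (negbTE nxy).
  case: (z =P y) => [->|zy] //=.
case yi: (y \in A i).
  have [_ Fi] := shF_mem_y nxy (AF i) yi (negbT xi).
  suff -> : [set z | sw x y z \in A i] = x |: (A i :\ y) by [].
  apply/setP => z; rewrite /sw !inE.
  case: (z =P x) => [->|zx]; first by rewrite yi.
  by case: (z =P y) => [->|zy] //=.
have Fi : A i \in F i.
  have [//|[xi' _ _]] := shF_mem nxy (AF i); by rewrite xi' in xi.
suff -> : [set z | sw x y z \in A i] = A i by [].
apply/setP => z; rewrite /sw !inE.
case: (z =P x) => [->|zx]; first by rewrite yi xi.
by case: (z =P y) => [->|zy] //=; rewrite xi yi.
Qed.

Definition wt (A : {set 'I_N}) := \sum_(z in A) (nat_of_ord z).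
Definition W s (F : 'I_s.+1 -> {set {set 'I_N}}) := \sum_i \sum_(A in F i) wt A.

Lemma wt_sh x y A : x < y -> y \in A -> x \notin A -> wt (x |: (A :\ y)) < wt A.
Proof.
move=> lxy yA xA; rewrite /wt big_setU1 /=; last by rewrite !inE (negbTE xA) andbF.
by rewrite [X in _ < X](big_setD1 y yA) /= ltn_add2r.
Qed.

Lemma ltxy_neq x y : x < y -> x != y.
Proof. by move=> lxy; apply/eqP => e; rewrite e ltnn in lxy. Qed.

Lemma famW x y F : x < y -> \sum_(C in shF x y F) wt C <= \sum_(A in F) wt A.
Proof.
move=> lxy; rewrite big_imset /=; last exact: shF_inj (ltxy_neq lxy).
apply: leq_sum => A AF; case: ifP => // hA.
have [yA xA ->] := sh_moved AF (negbT hA).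
exact: ltnW (wt_sh lxy yA xA).
Qed.

Lemma famW_lt x y F A0 : x < y -> A0 \in F -> y \in A0 -> x \notin A0 ->
  x |: (A0 :\ y) \notin F ->
  \sum_(C in shF x y F) wt C < \sum_(A in F) wt A.
Proof.
move=> lxy A0F yA0 xA0 nF; rewrite big_imset /=; last exact: shF_inj (ltxy_neq lxy).
rewrite (bigD1 A0 A0F) [X in _ < X](bigD1 A0 A0F) /=.
have -> : (sh x y A0 \in F) = false by rewrite /sh yA0 xA0 /=; apply: negbTE.
rewrite -addSn; apply: leq_add.
  by rewrite /sh yA0 xA0 /=; apply: wt_sh.
apply: leq_sum => A /andP [AF _]; case: ifP => // hA.
have [yA xA ->] := sh_moved AF (negbT hA).
exact: ltnW (wt_sh lxy yA xA).
Qed.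

Definition shifted s (F : 'I_s.+1 -> {set {set 'I_N}}) :=
  forall i A (x y : 'I_N), x < y -> A \in F i -> y \in A -> x \notin A ->
    x |: (A :\ y) \in F i.

Lemma exists_shifted s k (F : 'I_s.+1 -> {set {set 'I_N}}) :
  (forall i, kuniform k (F i)) -> cross_dependent F ->
  exists F' : 'I_s.+1 -> {set {set 'I_N}},
    [/\ forall i, kuniform k (F' i), cross_dependent F',
        forall i, #|F' i| = #|F i| & shifted F'].
Proof.
move: F; suff H : forall w (F : 'I_s.+1 -> {set {set 'I_N}}), W F < w ->
  (forall i, kuniform k (F i)) -> cross_dependent F ->
  exists F' : 'I_s.+1 -> {set {set 'I_N}},
    [/\ forall i, kuniform k (F' i), cross_dependent F',
        forall i, #|F' i| = #|F i| & shifted F'].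
  by move=> F; apply: H (ltnSn _).
elim=> [|w IH] F // hW hu hc.
case: (classic (shifted F)) => hsh.
  by exists F; split.
have [i0 [A0 [x [y [lxy A0F yA0 xA0 nF]]]]] : exists i A x y,
    [/\ x < y, A \in F i, y \in A, x \notin A & x |: (A :\ y) \notin F i].
  apply: NNPP => hne; apply: hsh => i A x y lxy AF yA xA.
  apply/negPn/negP => h; apply: hne; by exists i, A, x, y.
have nxy := ltxy_neq lxy.
have hWlt : W (fun i => shF x y (F i)) < w.
  rewrite -ltnS; apply: leq_trans hW; rewrite ltnS /W (bigD1 i0) // [X in _ <= X](bigD1 i0) //=.
  rewrite -addSn; apply: leq_add; first exact: famW_lt A0F yA0 xA0 nF.
  by apply: leq_sum => i _; apply: famW.
have hu2 : forall i, kuniform k (shF x y (F i)) by move=> i; apply: shF_unif.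
have [F' [hu' hc' hcard hsh']] := IH _ hWlt hu2 (shF_cross nxy hc).
exists F'; split=> // i; by rewrite hcard shF_card.
Qed.
End Shift.

Ltac settac := apply/setP => ?; rewrite !inE;
  repeat (rewrite ?eqxx /=; match goal with |- context [?a == ?b] => case: (a =P b) => [?|?]; subst end);
  try by [].

Section KK.
Variable N : nat.
Implicit Types (K : {set {set 'I_N}}).

Definition shadow K : {set {set 'I_N}} :=
  [set C | [exists A in K, exists a in A, C == A :\ a]].
Definition bounded t K := forall A, A \in K -> forall z : 'I_N, z \in A -> z < t.
Definition upclosed t K := forall A (a b : 'I_N), A \in K -> a \in A -> b \notin A ->
  a < b -> b < t -> b |: (A :\ a) \in K.

Lemma shadowP C K :
  reflect (exists A a, [/\ A \in K, a \in A & C = A :\ a]) (C \in shadow K).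
Proof.
apply: (iffP idP); rewrite inE.
- move=> /existsP [A /andP [AK /existsP [a /andP [aA /eqP ->]]]]; by exists A, a.
- move=> [A [a [AK aA ->]]]; apply/existsP; exists A; rewrite AK /=.
  by apply/existsP; exists a; rewrite aA eqxx.
Qed.

Lemma shadow_nonempty k K : 0 < k -> kuniform k K -> 0 < #|K| -> 0 < #|shadow K|.
Proof.
move=> k0 hu /card_gt0P [A AK].
have : 0 < #|A| by rewrite hu.
case/card_gt0P => a aA; apply/card_gt0P; exists (A :\ a); apply/shadowP.
by exists A, a.
Qed.

Lemma KK t : forall k m K, 0 < k -> k <= m -> kuniform k K -> bounded t K ->
  upclosed t K -> 'C(m, k) <= #|K| -> 'C(m, k.-1) <= #|shadow K|.
Proof.
elim: t => [|t IH] k m K k0 km hu hb hup hC.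
  have K0 : #|K| = 0.
    apply/eqP; rewrite cards_eq0; apply/eqP/setP => A; rewrite inE.
    apply/negP => AK; have : 0 < #|A| by rewrite hu.
    by case/card_gt0P => z zA; have := hb A AK z zA.
  have h1 : 0 < 'C(m, k) by rewrite bin_gt0.
  by move: (leq_trans h1 hC); rewrite K0.
have Kpos : 0 < #|K| by apply: leq_trans hC; rewrite bin_gt0.
case: (ltnP t N) => tN; last first.
  apply: IH => //.
    by move=> A _ z _; apply: leq_trans tN.
  by move=> A a b AK aA bA ab bt; apply: hup => //; apply: ltnW.
case: k k0 km hu hC => [//|[|k1]] _ km hu hC.
  by rewrite bin0; apply: shadow_nonempty hu Kpos.
case: m km hC => [//|m1] km hC.
set e : 'I_N := Ordinal tN.
have ne_e : forall z : 'I_N, z < t -> z != e.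
  by move=> z zt; apply/eqP => ze; move: zt; rewrite ze /= ltnn.
have lt_e : forall z : 'I_N, z < t.+1 -> z != e -> z < t.
  move=> z zt ze; rewrite ltn_neqAle -ltnS zt andbT; apply: contra ze => /eqP zt'.
  by apply/eqP; apply: val_inj; rewrite /= zt'.
set K0 := [set A in K | e \notin A].
set K1 := [set C : {set 'I_N} | (e \notin C) && (e |: C \in K)].
have K1P : forall C, C \in K1 = (e \notin C) && (e |: C \in K) by move=> C; rewrite inE.
have inj1 : {in K1 &, injective (fun C => e |: C)}.
  move=> C D; rewrite !K1P => /andP [eC _] /andP [eD _] /= E.
  by rewrite -(setU1K eC) E setU1K.
have hcard : #|K| = #|K0| + #|K1|.
  rewrite (card_split K (fun A => e \notin A)); congr (_ + _).
  rewrite -(card_in_imset inj1); congr #|pred_of_set _|; apply/setP => A.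
  rewrite !inE negbK; apply/andP/imsetP.
    case=> AK eA; exists (A :\ e); last by rewrite setD1K.
    by rewrite K1P setD11 setD1K.
  by case=> C; rewrite K1P => /andP [eC CK] ->; rewrite CK setU11.
have hu0 : kuniform k1.+2 K0 by move=> A; rewrite inE => /andP [AK _]; apply: hu.
have hu1 : kuniform k1.+1 K1.
  move=> C; rewrite K1P => /andP [eC CK]; have := hu _ CK.
  by rewrite cardsU1 eC add1n => -[].
have hb0 : bounded t K0.
  move=> A; rewrite inE => /andP [AK eA] z zA; apply: lt_e (hb _ AK _ zA) _.
  by apply/eqP => ze; move: zA; rewrite ze (negbTE eA).
have hb1 : bounded t K1.
  move=> C; rewrite K1P => /andP [eC CK] z zC; apply: lt_e.
    by apply: (hb _ CK); rewrite setU1r.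
  by apply/eqP => ze; move: zC; rewrite ze (negbTE eC).
have hup0 : upclosed t K0.
  move=> A a b; rewrite !inE => /andP [AK eA] aA bA ab bt.
  rewrite (hup A a b AK aA bA ab (ltnW bt)) /=.
  by rewrite eq_sym (negbTE (ne_e b bt)) (negbTE eA) andbF.
have hup1 : upclosed t K1.
  move=> C a b; rewrite !K1P => /andP [eC CK] aC bC ab bt.
  have ae : a != e by apply/eqP => ae; move: aC; rewrite ae (negbTE eC).
  have be := ne_e b bt.
  apply/andP; split.
    by rewrite !inE eq_sym (negbTE be) (negbTE eC) andbF.
  have -> : e |: (b |: (C :\ a)) = b |: ((e |: C) :\ a).
    apply/setP => z; rewrite !inE; case: (z =P e) => [->|_] //=.
    by rewrite [e == a]eq_sym (negbTE ae) /= orbT.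
  apply: hup => //; first by rewrite setU1r.
    by rewrite !inE (negbTE be) (negbTE bC).
  exact: ltnW.
have sub0 : shadow K0 \subset K1.
  apply/subsetP => D /shadowP [A [a [AK0 aA ->]]]; move: (AK0); rewrite inE => /andP [AK eA].
  rewrite K1P; apply/andP; split; first by rewrite !inE (negbTE eA) andbF.
  have at' : a < t := hb0 A AK0 a aA.
  exact: (hup A a e AK aA eA at' (ltnSn t)).
have eS : forall D, D \in shadow K1 -> e \notin D.
  move=> D /shadowP [C [c [CK1 cC ->]]]; move: CK1; rewrite K1P => /andP [eC _].
  by rewrite !inE (negbTE eC) andbF.
have injS : {in shadow K1 &, injective (fun D => e |: D)}.
  move=> C D /eS eC /eS eD /= E.
  by rewrite -(setU1K eC) E setU1K.
have sub1 : K1 :|: [set e |: D | D in shadow K1] \subset shadow K.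
  apply/subsetP => X; rewrite inE => /orP [XK1|/imsetP [D DS ->]].
    apply/shadowP; exists (e |: X), e; move: XK1; rewrite K1P => /andP [eX XK].
    by rewrite setU11 setU1K.
  move/shadowP: DS => [C [c [CK1 cC ->]]]; move: CK1; rewrite K1P => /andP [eC CK].
  have ce : c != e by apply/eqP => ce; move: cC; rewrite ce (negbTE eC).
  apply/shadowP; exists (e |: C), c; split => //; first by rewrite setU1r.
  apply/setP => z; rewrite !inE; case: (z =P e) => [->|_] //=.
  by rewrite [e == c]eq_sym (negbTE ce).
have dis : K1 :&: [set e |: D | D in shadow K1] = set0.
  apply/setP => X; rewrite !inE; apply/negP => /andP [XK1 /imsetP [D _ E]].
  by move: XK1; rewrite E setU11.
have cardS : #|K1| + #|shadow K1| <= #|shadow K|.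
  rewrite -(card_in_imset injS); apply: leq_trans (subset_leq_card sub1).
  by rewrite cardsU dis cards0 subn0.
have sub0c := subset_leq_card sub0.
rewrite binS in hC; rewrite [k1.+2.-1]/= binS.
case: (leqP 'C(m1, k1.+1) #|K1|) => h1.
  have := IH k1.+1 m1 K1 erefl km hu1 hb1 hup1 h1; rewrite /=.
  move: cardS => H1 H2; apply: leq_trans H1; exact: leq_add h1 H2.
case: (leqP k1.+2 m1) => km1.
  have h0 : 'C(m1, k1.+2) <= #|K0| by lia.
  have := IH k1.+2 m1 K0 erefl km1 hu0 hb0 hup0 h0; rewrite /=.
  by move=> H; have := leq_trans H sub0c; rewrite leqNgt h1.
have em : m1 = k1.+1 by lia.
rewrite em binn in h1.
have K0pos : 0 < #|K0| by lia.
have := @shadow_nonempty k1.+2 K0 isT hu0 K0pos.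
by move=> H; have := leq_trans H sub0c; rewrite leqNgt h1.
Qed.
End KK.

Section Lift.
Variable n : nat.
Definition liftS (B : {set 'I_n}) : {set 'I_n.+1} := [set lift ord_max z | z in B].

Lemma mem_liftS B z : (lift ord_max z \in liftS B) = (z \in B).
Proof. by rewrite mem_imset //; apply: lift_inj. Qed.

Lemma liftS_inj : injective liftS.
Proof. by move=> B C E; apply/setP => z; rewrite -!mem_liftS E. Qed.

Lemma max_notin_liftS B : ord_max \notin liftS B.
Proof. by apply/imsetP => -[z _ E]; move: (neq_lift ord_max z); rewrite -E eqxx. Qed.

Lemma liftS_card B : #|liftS B| = #|B|.
Proof. by rewrite card_imset //; apply: lift_inj. Qed.

Lemma liftS_onto (A : {set 'I_n.+1}) : ord_max \notin A -> A = liftS [set z | lift ord_max z \in A].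
Proof.
move=> mA; apply/setP => z; case: (unliftP ord_max z) => [z'|] ->.
  by rewrite mem_liftS inE.
by rewrite (negbTE mA) (negbTE (max_notin_liftS _)).
Qed.

Lemma fam_card (X : {set {set 'I_n.+1}}) :
  (forall A, A \in X -> ord_max \notin A) -> #|X| = #|[set B | liftS B \in X]|.
Proof.
move=> hX; rewrite -(card_imset _ liftS_inj); congr #|pred_of_set _|.
apply/setP => A; apply/idP/imsetP.
  move=> AX; exists [set z | lift ord_max z \in A]; last exact: liftS_onto (hX A AX).
  by rewrite inE -liftS_onto ?hX.
by case=> B; rewrite inE => BX ->.
Qed.

Lemma lt_max (z : 'I_n.+1) : z != ord_max -> z < n.
Proof.
move=> ne; rewrite ltn_neqAle -ltnS ltn_ord andbT; apply: contra ne => /eqP e.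
by apply/eqP; apply: val_inj; rewrite /= e.
Qed.
End Lift.

Theorem proposition1 (n s k : nat) (hn : 0 < n) (hs : 0 < s) (hk : 0 < k)
  (hnsk : (s.+1) * k <= n) :
  (forall G : 'I_s.+1 -> {set {set 'I_n}},
      (forall i, kuniform k (G i)) -> cross_dependent G ->
      exists i, #|G i| <= 'C(n, k) - 'C(n - s, k)) ->
  forall F : 'I_s.+1 -> {set {set 'I_n.+1}},
    (forall i, kuniform k (F i)) -> cross_dependent F ->
    exists i, #|F i| <= 'C(n.+1, k) - 'C(n.+1 - s, k).
Proof.
move=> hyp F hu hc.
have [F' [hu' hc' hcard hsh]] := exists_shifted hu hc.
pose G := fun i => [set B : {set 'I_n} | liftS B \in F' i].
have huG : forall i, kuniform k (G i).
  by move=> i B; rewrite inE => /hu' <-; rewrite liftS_card.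
have hcG : cross_dependent G.
  move=> [A [AG Adis]]; apply: hc'; exists (fun i => liftS (A i)); split.
    by move=> i; have := AG i; rewrite inE.
  move=> i j ij; apply/disjP => z /imsetP [z1 z1A ->] /imsetP [z2 z2A /lift_inj E].
  by subst z2; exact: (proj1 (disjP _ _) (Adis _ _ ij) _ z1A z2A).
have [i hi] := hyp G huG hcG.
exists i; rewrite -hcard.
set Fi := F' i.
have huFi : kuniform k Fi := hu' i.
have eF := card_split Fi (fun A => ord_max \notin A).
have eG : #|[set A in Fi | ord_max \notin A]| = #|G i|.
  rewrite fam_card; last by move=> A; rewrite inE => /andP [].
  congr #|pred_of_set _|; apply/setP => B; rewrite !inE max_notin_liftS andbT //.
pose AV := [set A : {set 'I_n.+1} | (#|A| == k) && (ord_max \notin A)].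
pose CT := [set A : {set 'I_n.+1} | (#|A| == k) && ~~ (ord_max \notin A)].
pose H0 := [set A : {set 'I_n.+1} | (#|A| == k) && (ord_max \notin A) && (A \notin Fi)].
pose H1 := [set A : {set 'I_n.+1} | (#|A| == k) && ~~ (ord_max \notin A) && (A \notin Fi)].
have eAV : #|AV| = 'C(n, k).
  rewrite fam_card; last by move=> A; rewrite inE => /andP [].
  rewrite -[n in 'C(n, _)]card_ord -card_draws; congr #|pred_of_set _|.
  by apply/setP => B; rewrite !inE liftS_card max_notin_liftS andbT.
have eAVCT : #|AV| + #|CT| = 'C(n.+1, k).
  rewrite -[in RHS](card_ord n.+1) -card_draws.
  rewrite (card_split [set A : {set 'I_n.+1} | #|A| == k] (fun A : {set 'I_n.+1} => ord_max \notin A)); congr (_ + _); apply: eq_card => A; by rewrite !inE.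
have eAV2 : #|AV| = #|H0| + #|[set A in Fi | ord_max \notin A]|.
  rewrite (card_split AV (fun A => A \notin Fi)); congr (_ + _); apply: eq_card => A; rewrite !inE //.
  case AF: (A \in Fi); rewrite /= ?andbF ?andbT //.
  by rewrite huFi // eqxx.
have eCT2 : #|CT| = #|H1| + #|[set A in Fi | ~~ (ord_max \notin A)]|.
  rewrite (card_split CT (fun A => A \notin Fi)); congr (_ + _); apply: eq_card => A; rewrite !inE //.
  case AF: (A \in Fi); rewrite /= ?andbF ?andbT //.
  by rewrite huFi // eqxx.
have hbH0 : bounded n H0.
  move=> A; rewrite !inE => /andP [/andP [_ mA] _] z zA; apply: lt_max.
  by apply/eqP => ez; move: zA; rewrite ez (negbTE mA).
have hupH0 : upclosed n H0.
  move=> A a b AH aA bA ab bn; move: AH; rewrite !inE => /andP [/andP [/eqP cA mA] AF].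
  have nba : b != a by apply/eqP => e; rewrite e ltnn in ab.
  have nbm : b != ord_max by apply/eqP => e; move: bn; rewrite e /= ltnn.
  apply/andP; split; first (apply/andP; split).
  - by rewrite cardsU1 !inE (negbTE bA) andbF /= -cA (cardsD1 a A) aA.
  - by rewrite ?inE eq_sym (negbTE nbm) /= (negbTE mA) andbF.
  - apply/negP => BF.
    have := hsh i _ a b ab BF (setU11 _ _).
    rewrite !inE eq_sym (negbTE nba) eqxx /= => /(_ isT).
    by rewrite sh_back // ?(negbTE AF) // eq_sym.
have hkm : k <= n - s.
  have h2 : s <= s * k by rewrite leq_pmulr.
  move: hnsk; rewrite mulSn; lia.
have hCH0 : 'C(n - s, k) <= #|H0|.
  have := leq_bin2l k (leq_subr s n); move: eAV eAV2 eG hi.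
  set x1 := #|AV|; set x2 := #|H0|; set x4 := #|G i|.
  set x3 := #|[set A in Fi | ord_max \notin A]|. lia.
have huH0 : kuniform k H0 by move=> A; rewrite !inE => /andP [/andP [/eqP -> _] _].
have hKK := KK hk hkm huH0 hbH0 hupH0 hCH0.
have eS : forall D, D \in shadow H0 -> exists A a, [/\ A \in H0, a \in A, a \notin D,
    ord_max \notin D & D = A :\ a].
  move=> D /shadowP [A [a [AH aA ->]]]; exists A, a; split=> //.
    by rewrite !inE eqxx.
  by move: AH; rewrite !inE => /andP [/andP [_ mA] _]; rewrite (negbTE mA) andbF.
have injM : {in shadow H0 &, injective (fun D => ord_max |: D)}.
  move=> C D /eS [_ [_ [_ _ _ mC _]]] /eS [_ [_ [_ _ _ mD _]]] /= E.
  by rewrite -(setU1K mC) E setU1K.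
have subM : [set ord_max |: D | D in shadow H0] \subset H1.
  apply/subsetP => X /imsetP [D DS ->].
  have [A [a [AH aA aD mD eD]]] := eS D DS.
  move: AH; rewrite !inE => /andP [/andP [/eqP cA mA] AF].
  have nam : a != ord_max by apply/eqP => e; move: aA; rewrite e (negbTE mA).
  rewrite eqxx /= andbT; apply/andP; split.
    rewrite cardsU1 mD eD -cA (cardsD1 a A) aA. done.
  apply/negP => XF.
  have := hsh i _ a ord_max (lt_max nam) XF (setU11 _ _).
  rewrite !inE (negbTE nam) /= (negbTE aD) => /(_ isT).
  rewrite eD sh_back //; first by rewrite (negbTE AF).
  by rewrite eq_sym.
have hH1 : #|shadow H0| <= #|H1|.
  by rewrite -(card_in_imset injM); apply: subset_leq_card.
have eB0 : forall j, 'C(n.+1 - s, j.+1) = 'C(n - s, j.+1) + 'C(n - s, j).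
  have sn : s <= n by lia.
  by move=> j; rewrite subSn.
have eB := eB0 k.-1; rewrite prednK // in eB.
have hb2 := leq_bin2l k (leq_subr s n).
move: eF eG hi eAVCT eAV eCT2 hH1 hKK eB hb2.
set y1 := #|Fi|; set y2 := #|[set A in Fi | ord_max \notin A]|.
set y3 := #|[set A in Fi | ~~ (ord_max \notin A)]|.
set y4 := #|G i|; set y5 := #|AV|; set y6 := #|CT|; set y7 := #|H1|.
set y8 := #|shadow H0|.
lia.
Qed.
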